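(* Let $n,m\ge1$ be integers (not necessarily distinct). Then for the Ramsey number $\mathcal{R}_{\mathcal{IDM}}$ with respect to the class $\mathcal{IDM}$ of idempotents graphs, \[ \mathcal{R}_{\mathcal{IDM}}(n,m)=\mathcal{R}_{\mathcal{PO}}(n,m)=(n-1)(m-1)+1 . \]
   Context: For a commutative ring $R$ (with $1\ne0$), the idempotents graph $\mathrm{Idm}(R)$ is the simple undirected graph whose vertices are the idempotents of $R$ ($a^2=a$), distinct $a,b$ adjacent iff $a\mid b$ or $b\mid a$; $\mathcal{IDM}$ is the class of all idempotents graphs of commutative rings. $\mathcal{PO}$ is the class of partial order graphs $G_A$ of posets $(A,\le)$ (distinct vertices adjacent iff comparable). For a class $\mathcal{C}$ of graphs, $\mathcal{R}_{\mathcal{C}}(n,m)$ is the minimal $r$ such that every induced subgraph with $r$ vertices of any graph in $\mathcal{C}$ contains either $K_n$ or an independent set of $m$ vertices. *)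

(* Defs.v *)
From mathcomp Require Import all_boot all_algebra.
Set Implicit Arguments. Unset Strict Implicit. Unset Printing Implicit Defensive.
Import GRing.Theory.
Local Open Scope ring_scope.

(* Generic Ramsey property of a (possibly infinite) simple graph with vertex
   predicate [vert] on a type [V] and adjacency [adj]:
   every induced subgraph on r distinct vertices (an injective r-tuple of
   vertices) contains K_n (n distinct pairwise adjacent vertices) or an
   independent set of m distinct vertices. *)
Definition ramsey_ok (V : Type) (vert : V -> Prop) (adj : V -> V -> Prop)
    (n m r : nat) : Prop :=
  forall f : 'I_r -> V, injective f -> (forall i, vert (f i)) ->
    (exists g : 'I_n -> 'I_r, injective g /\
       forall i j, i != j -> adj (f (g i)) (f (g j)))
    \/
    (exists g : 'I_m -> 'I_r, injective g /\
       forall i j, i != j -> ~ adj (f (g i)) (f (g j))).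

Definition rdvd (R : comNzRingType) (a b : R) : Prop := exists c : R, b = a * c.

Definition idempotent (R : comNzRingType) (a : R) : Prop := a * a = a.
Definition idm_adj (R : comNzRingType) (a b : R) : Prop :=
  a <> b /\ (rdvd a b \/ rdvd b a).

Definition ramsey_IDM (n m r : nat) : Prop :=
  forall R : comNzRingType, ramsey_ok (@idempotent R) (@idm_adj R) n m r.

Definition is_poset (A : Type) (le : A -> A -> Prop) : Prop :=
  (forall x, le x x) /\
  (forall x y, le x y -> le y x -> x = y) /\
  (forall x y z, le x y -> le y z -> le x z).
Definition po_adj (A : Type) (le : A -> A -> Prop) (x y : A) : Prop :=
  x <> y /\ (le x y \/ le y x).

Definition ramsey_PO (n m r : nat) : Prop :=
  forall (A : Type) (le : A -> A -> Prop), is_poset le ->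
    ramsey_ok (fun _ : A => True) (po_adj le) n m r.

Definition is_min_nat (good : nat -> Prop) (k : nat) : Prop :=
  good k /\ forall r, good r -> (k <= r)%N.

(* Main.v *)
Require Import Defs.
From HB Require Import structures.
From mathcomp Require Import all_boot all_algebra.
From mathcomp Require Import zify.
From Stdlib Require Import ClassicalEpsilon.
Import GRing.Theory.
Set Implicit Arguments.

Definition BF (k : nat) := {ffun 'I_k.+1 -> 'F_2}.
HB.instance Definition _ k := GRing.PzRing.copy (BF k) {ffun 'I_k.+1 -> 'F_2}.
Lemma BF_mulC k : commutative (@GRing.mul (BF k)).
Proof. move=> f g; apply/ffunP=> i; rewrite !ffunE GRing.mulrC //. Qed.
HB.instance Definition _ k := GRing.PzSemiRing_hasCommutativeMul.Build (BF k) (@BF_mulC k).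
Lemma BF_nz k : (1%R : BF k) != 0%R.
Proof. apply/eqP => /ffunP/(_ ord0); rewrite !ffunE. done. Qed.
HB.instance Definition _ k := GRing.PzSemiRing_isNonZero.Build (BF k) (@BF_nz k).

Lemma lower_core (V : Type) (vert : V -> Prop) (adj : V -> V -> Prop) n m r
  (f : 'I_r -> V) (c l : 'I_r -> nat) :
  (1 <= n)%N -> (1 <= m)%N -> injective f -> (forall i, vert (f i)) ->
  (forall i, c i < m - 1)%N -> (forall i, l i < n - 1)%N ->
  (forall i j, c i = c j -> l i = l j -> i = j) ->
  (forall i j, i != j -> adj (f i) (f j) -> c i = c j) ->
  (forall i j, i != j -> c i = c j -> adj (f i) (f j)) ->
  ~ ramsey_ok vert adj n m r.
Proof.
move=> hn hm finj fv hc hl hcl h1 h2 /(_ f finj fv) [[g [ginj gadj]] | [g [ginj gnadj]]].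
- have hcg : forall i j, c (g i) = c (g j).
    move=> i j; case: (eqVneq i j) => [->//|ne]; apply: h1; last exact: gadj.
    by rewrite (inj_eq ginj).
  pose h (i : 'I_n) : 'I_(n-1) := Ordinal (hl (g i)).
  have hinj : injective h.
    move=> i j /(congr1 val) /= e; apply: ginj; exact: hcl (hcg i j) e.
  have := leq_card h hinj; rewrite !card_ord. lia.
- pose h (i : 'I_m) : 'I_(m-1) := Ordinal (hc (g i)).
  have hinj : injective h.
    move=> i j /(congr1 val) /= e; case: (eqVneq i j) => // ne; exfalso.
    apply: (gnadj i j ne); apply: h2 => //; by rewrite (inj_eq ginj).
  have := leq_card h hinj; rewrite !card_ord. lia.
Qed.

Lemma mirsky (T : finType) (le : rel T) : reflexive le -> antisymmetric le ->
  transitive le -> forall m n (A : {set T}), (1 <= n)%N -> ((n-1)*(m-1) < #|A|)%N ->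
  (exists s : seq T, [/\ size s = n, {subset s <= A} &
        sorted (fun x y => le x y && (x != y)) s]) \/
  (exists B : {set T}, [/\ B \subset A, (m <= #|B|)%N &
        {in B &, forall x y, x != y -> ~~ le x y}]).
Proof.
move=> lerefl leanti letrans m; elim=> [//|n IH] A _ hA.
case: (posnP n) => [n0|npos].
  subst n. have: (0 < #|A|)%N by lia.
  rewrite card_gt0 => /set0Pn [a aA]. left; exists [:: a]; split => //.
  by move=> x; rewrite inE => /eqP->.
set Mx := [set x in A | [forall y in A, le x y ==> (y == x)]].
case: (leqP m #|Mx|) => hM.
  right; exists Mx; split => //.
    by apply/subsetP=> x; rewrite inE => /andP[].
  move=> x y; rewrite inE => /andP[_ /forall_inP H]; rewrite inE => /andP[yA _] ne.
  apply/negP => lxy; have := H y yA; rewrite lxy /= => /eqP e.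
  by rewrite e eqxx in ne.
have hD : ((n-1)*(m-1) < #|A :\: Mx|)%N.
  have e := cardsID Mx A.
  have : (#|A :&: Mx| <= #|Mx|)%N by apply: subset_leq_card; apply: subsetIr.
  nia.
case: (IH (A :\: Mx) npos hD) => [[s [sz sA ss]] | [B [BA hB hBa]]].
- case: s sz sA ss => [|x0 s'] sz sA ss; first by move: sz => /= ?; lia.
  set t := last x0 s'.
  have tin : t \in A :\: Mx by apply: sA; rewrite /t mem_last.
  move: tin; rewrite !inE negb_and => /andP [/orP tM tA].
  have : ~~ [forall y in A, le t y ==> (y == t)].
    by case: tM => [/negP//|//].
  move=> /forall_inPn [y yA]; rewrite negb_imply => /andP[lty ne].
  left; exists (x0 :: rcons s' y); split.
  + by rewrite /= size_rcons -sz.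
  + move=> z; rewrite inE mem_rcons inE => /orP[/eqP->|/orP[/eqP->//|zs]].
      by have := sA x0; rewrite !inE eqxx => /(_ isT) /andP[].
    by have := sA z; rewrite !inE zs orbT => /(_ isT) /andP[].
  + rewrite /= rcons_path; apply/andP; split; first exact: ss.
    by rewrite -/t lty eq_sym ne.
- right; exists B; split => //.
  by apply: subset_trans BA _; apply: subsetDl.
Qed.

Definition pb (P : Prop) : bool :=
  if excluded_middle_informative P then true else false.
Lemma pbP P : reflect P (pb P).
Proof. by rewrite /pb; case: excluded_middle_informative => h; constructor. Qed.

Lemma upper_core (V : Type) (vert : V -> Prop) (adj : V -> V -> Prop)
  (le : V -> V -> Prop) n m r :
  (1 <= n)%N -> (1 <= m)%N -> ((n-1)*(m-1) < r)%N ->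
  (forall x, vert x -> le x x) ->
  (forall x y, vert x -> vert y -> le x y -> le y x -> x = y) ->
  (forall x y z, vert x -> vert y -> vert z -> le x y -> le y z -> le x z) ->
  (forall x y, vert x -> vert y -> (adj x y <-> x <> y /\ (le x y \/ le y x))) ->
  ramsey_ok vert adj n m r.
Proof.
move=> hn hm hr hrefl hanti htrans hadj f finj fv.
pose leb (i j : 'I_r) := pb (le (f i) (f j)).
have lrefl : reflexive leb by move=> i; apply/pbP; apply: hrefl.
have lanti : antisymmetric leb.
  by move=> i j /andP[/pbP a /pbP b]; apply: finj; apply: hanti.
have ltrans : transitive leb.
  move=> j i k /pbP a /pbP b; apply/pbP; apply: (htrans _ (f j)) => //.
have hA : ((n-1)*(m-1) < #|[set: 'I_r]|)%N by rewrite cardsT card_ord.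
case: (@mirsky _ leb lrefl lanti ltrans m n _ hn hA) => [[s [sz _ ss]] | [B [_ hB hBa]]].
- left. case: s sz ss => [|x0 s'] sz ss; first by move: sz => /= ?; lia.
  pose g (i : 'I_n) := nth x0 (x0 :: s') i.
  pose lt := fun x y => leb x y && (x != y).
  have lttr : transitive lt.
    move=> j i k /andP[a na] /andP[b nb]; rewrite /lt (ltrans _ _ _ a b) /=.
    apply/negP => /eqP e; subst k.
    by have := lanti _ _ (introT andP (conj a b)) => e; rewrite e eqxx in na.
  have key : forall i j : 'I_n, (i < j)%N -> lt (g i) (g j).
    move=> i j ij; apply: (sorted_ltn_nth lttr) => //; rewrite inE sz; exact: ltn_ord.
  have gneq : forall i j : 'I_n, i != j -> g i != g j.
    move=> i j; case: (ltngtP i j) => h ne.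
    + by case/andP: (key _ _ h).
    + by case/andP: (key _ _ h); rewrite eq_sym.
    + by rewrite (val_inj h) eqxx in ne.
  exists g; split.
    by move=> i j e; apply/eqP; apply/negPn/negP => /gneq; rewrite e eqxx.
  move=> i j ne; apply/(hadj _ _ (fv _) (fv _)); split.
    by move/finj => e; move: (gneq _ _ ne); rewrite e eqxx.
  case: (ltngtP i j) => h.
  + by left; case/andP: (key _ _ h) => /pbP.
  + by right; case/andP: (key _ _ h) => /pbP.
  + by rewrite (val_inj h) eqxx in ne.
- right. pose g (i : 'I_m) : 'I_r := enum_val (widen_ord hB i).
  have ginj : injective g.
    move=> i j /enum_val_inj /(congr1 val) /= e; exact: val_inj.
  exists g; split => // i j ne.
  have gne : g i != g j by rewrite (inj_eq ginj).
  move/(hadj _ _ (fv _) (fv _)) => [_ [a|a]].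
  + by have := hBa _ _ (enum_valP _) (enum_valP _) gne; rewrite /leb; move/pbP: a => ->.
  + have gne' : g j != g i by rewrite eq_sym.
    by have := hBa _ _ (enum_valP _) (enum_valP _) gne'; rewrite /leb; move/pbP: a => ->.
Qed.

Lemma PO_upper n m : (1 <= n)%N -> (1 <= m)%N -> ramsey_PO n m ((n-1)*(m-1)+1).
Proof.
move=> hn hm A le [hr [ha ht]].
apply: (@upper_core A (fun _ => True) (po_adj le) le) => //; try lia.
all: try (by move=> x y z _ _ _; apply: ht).
all: try (by move=> x _; apply: hr).
all: try (by move=> x y _ _; apply: ha).
all: try (by move=> x y _ _).
Qed.

Lemma IDM_upper n m : (1 <= n)%N -> (1 <= m)%N -> ramsey_IDM n m ((n-1)*(m-1)+1).
Proof.
move=> hn hm R.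
apply: (@upper_core R (@Defs.idempotent R) (@idm_adj R) (@rdvd R)) => //; first lia.
- by move=> x _; exists 1%R; rewrite GRing.mulr1.
- move=> x y ix iy [c hc] [d hd].
  have e1 : (x * y = y)%R by rewrite hc GRing.mulrA ix.
  have e2 : (y * x = x)%R by rewrite hd GRing.mulrA iy.
  by rewrite -e2 GRing.mulrC e1.
- move=> x y z _ _ _ [c ->] [d ->]; exists (c * d)%R; by rewrite GRing.mulrA.
Qed.

Lemma divfacts n m r (i : 'I_r) : (r <= (n-1)*(m-1))%N ->
  (i %/ (n-1) < m-1)%N /\ (i %% (n-1) < n-1)%N.
Proof.
move=> hr; have hi := ltn_ord i.
have d0 : (0 < n - 1)%N by case: (n - 1) hr => //= ?; lia.
split; last by rewrite ltn_pmod.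
rewrite ltn_divLR //; lia.
Qed.

Lemma divinj d r (i j : 'I_r) : i %/ d = j %/ d -> i %% d = j %% d -> i = j.
Proof. by move=> e1 e2; apply: val_inj; rewrite /= (divn_eq i d) (divn_eq j d) e1 e2. Qed.

Lemma PO_lower n m r : (1 <= n)%N -> (1 <= m)%N -> (r <= (n-1)*(m-1))%N ->
  ~ ramsey_PO n m r.
Proof.
move=> hn hm hr H.
have hp : is_poset (fun p q : nat * nat => p.1 = q.1 /\ (p.2 <= q.2)%N).
  split; first by move=> x; split.
  split; first by move=> [a b] [c d] /= [-> h1] [_ h2]; congr pair; apply/eqP; rewrite eqn_leq h1.
  by move=> x y z [-> h1] [-> h2]; split => //; apply: leq_trans h1 h2.
have := H _ _ hp.
pose f (i : 'I_r) := (i %/ (n-1), i %% (n-1)).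
apply: (@lower_core _ _ _ n m r f (fun i => i %/ (n-1)) (fun i => i %% (n-1))) => //.
- by move=> i j [e1 e2]; apply: (@divinj (n-1) _ _ _ e1 e2).
- by move=> i; case: (@divfacts n m r i hr).
- by move=> i; case: (@divfacts n m r i hr).
- exact: divinj.
- by move=> i j _ [_ [[e _]|[e _]]].
- move=> i j ne ce; split.
    by move=> [e1 e2]; move: ne; rewrite (@divinj (n-1) _ _ _ e1 e2) eqxx.
  rewrite /f /=; case: (leqP (i %% (n-1)) (j %% (n-1))) => h.
    by left; split.
  by right; split => //; apply: ltnW.
Qed.

Definition memb (M c l x : nat) : bool := (x == c) || ((M <= x) && (x < M + l))%N.
Definition FF (K M c l : nat) : BF K := [ffun x : 'I_K.+1 => (memb M c l x)%:R%R].

Lemma FF_idem K M c l : Defs.idempotent (FF K M c l).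
Proof. apply/ffunP => x; rewrite !ffunE; case: (memb M c l x); by rewrite ?GRing.mulr1 ?GRing.mulr0. Qed.

Lemma FF_dvd K M c l c' l' : (c < M)%N -> (c' < M)%N -> (M + l' <= K)%N ->
  rdvd (FF K M c l) (FF K M c' l') -> c = c' /\ (l' <= l)%N.
Proof.
move=> hc hc' hK [d e].
have E x : (x <= K)%N -> memb M c' l' x -> memb M c l x.
  move=> xK h; have := congr1 (fun f : BF K => f (inord x)) e.
  rewrite /= !ffunE inordK // h.
  case: (memb M c l x) => //; rewrite GRing.mul0r => /eqP; by rewrite GRing.oner_eq0.
have := E c' (ltnW (leq_trans hc' (leq_trans (leq_addr l' M) hK))).
rewrite /memb eqxx => /(_ isT) /orP [/eqP ->|/andP[h _]]; last lia.
split => //.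
clear e; case: l' hK E => // l' hK E.
have xK : (M + l' <= K)%N by lia.
have := E (M + l') xK.
rewrite /memb => /(_ _) /orP [|/eqP ?|/andP [_ h]]; first (apply/orP; right; apply/andP; split; lia); lia.
Qed.

Lemma rdvd_eq (R : comNzRingType) (a b : R) : a = b -> rdvd a b.
Proof. by move=> ->; exists 1%R; rewrite GRing.mulr1. Qed.

Lemma FF_dvd_back K M c l c' l' : c = c' -> (l' <= l)%N ->
  rdvd (FF K M c l) (FF K M c' l').
Proof.
move=> <- hl; exists (FF K M c l'); apply/ffunP => x; rewrite !ffunE.
case h: (memb M c l' x); last by rewrite GRing.mulr0.
have -> : memb M c l x.
  move: h; rewrite /memb => /orP [->//|/andP [h1 h2]].
  by apply/orP; right; rewrite h1 /=; apply: leq_trans h2 _; rewrite leq_add2l.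
by rewrite GRing.mulr1.
Qed.

Lemma IDM_lower n m r : (1 <= n)%N -> (1 <= m)%N -> (r <= (n-1)*(m-1))%N ->
  ~ ramsey_IDM n m r.
Proof.
move=> hn hm hr H.
set K := ((m-1) + (n-1))%N.
have := H (BF K).
pose c (i : 'I_r) := i %/ (n-1).
pose l (i : 'I_r) := i %% (n-1).
have hc i : (c i < m - 1)%N by case: (@divfacts n m r i hr).
have hl i : (l i < n - 1)%N by case: (@divfacts n m r i hr).
have hK i : (m - 1 + l i <= K)%N by have := hl i; rewrite /K; lia.
pose f (i : 'I_r) := FF K (m-1) (c i) (l i).
have fdvd i j : rdvd (f i) (f j) -> c i = c j.
  by move/(FF_dvd (hc i) (hc j) (hK j)) => [].
apply: (@lower_core _ _ _ n m r f c l) => //.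
- move=> i j e.
  have [e1 h1] := FF_dvd (hc i) (hc j) (hK j) (@rdvd_eq _ _ _ e).
  have [_ h2] := FF_dvd (hc j) (hc i) (hK i) (@rdvd_eq _ _ _ (esym e)).
  apply: (@divinj (n-1) _ _ _ e1); apply/eqP; rewrite eqn_leq -/(l i) -/(l j) h1 h2 //.
- by move=> i; apply: FF_idem.
- move=> i j; exact: (@divinj (n-1) _ i j).
- by move=> i j _ [_ [/fdvd|/fdvd]].
- move=> i j ne ce; split.
    move=> e; have [e1 h1] := FF_dvd (hc i) (hc j) (hK j) (@rdvd_eq _ _ _ e).
    have [_ h2] := FF_dvd (hc j) (hc i) (hK i) (@rdvd_eq _ _ _ (esym e)).
    have e3 : l i = l j by apply/eqP; rewrite eqn_leq h1 h2.
    by move: ne; rewrite (@divinj (n-1) _ _ _ e1 e3) eqxx.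
  case: (leqP (l i) (l j)) => h.
    by right; apply: FF_dvd_back.
  by left; apply: FF_dvd_back => //; apply: ltnW.
Qed.

Theorem theorem3p21 (n m : nat) (hn : (1 <= n)%N) (hm : (1 <= m)%N) :
  is_min_nat (ramsey_IDM n m) ((n - 1) * (m - 1) + 1)%N /\
  is_min_nat (ramsey_PO n m) ((n - 1) * (m - 1) + 1)%N.
Proof.
split; split.
- exact: IDM_upper.
- move=> r hr; rewrite leqNgt; apply/negP => hlt.
  by apply: (IDM_lower hn hm _ hr); lia.
- exact: PO_upper.
- move=> r hr; rewrite leqNgt; apply/negP => hlt.
  by apply: (PO_lower hn hm _ hr); lia.
Qed.
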